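(* Let $g$ solve system (S3) with initial data $h_{ii}>0$ satisfying either $h_{11}=h_{22}<h_{33}$, or $h_{11}<h_{22}=h_{33}<4h_{11}$. Then the solution exists for all $t\ge0$, and, with $\kappa = (4\det h - h_{00}h_{22}^3)\,h_{00}^3h_{22}$: (i) $(4\det h - g_{00}g_{22}^3)\,g_{00}^3g_{22} = \kappa$ for all $t$; (ii) $g_{00}\to (\kappa/3)^{3/8}(\det h)^{-1/2}$ and $g_{11},g_{22},g_{33}\to (3/\kappa)^{1/8}(\det h)^{1/2}$ as $t\to\infty$; (iii) if $h_{11}=h_{22}$, then $g_{11}$ and $g_{22}$ are increasing and $g_{33}$ is decreasing; (iv) if $h_{22}=h_{33}$, then $g_{11}$ is increasing.
   Context: Let $\det h = h_{00}h_{11}h_{22}h_{33}$, $\beta=\frac{1}{6(\det h)^2}$, and $p(x,y,z) = x^4 - x^3(y+z) + x^2yz + x(-y^3+y^2z+yz^2-z^3) + y^4 - y^3z - yz^3 + z^4$, $q(x,y,z) = 5x^4 - 3x^3(y+z) + x^2yz + x(y^3-y^2z-yz^2+z^3) - 3y^4 + 3y^3z + 3yz^3 - 3z^4$. System (S3): $\dot g_{00} = -\beta\,p(g_{11},g_{22},g_{33})\,g_{00}^3$, $\dot g_{11} = -\beta\,q(g_{11},g_{22},g_{33})\,g_{00}^2g_{11}$, $\dot g_{22} = -\beta\,q(g_{22},g_{33},g_{11})\,g_{00}^2g_{22}$, $\dot g_{33} = -\beta\,q(g_{33},g_{11},g_{22})\,g_{00}^2g_{33}$, $g_{ii}(0)=h_{ii}$.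 This is Bach flow $\partial_tg=B$ on $\mathbb{R}\times\mathbb{S}^3$ in a diagonalizing left-invariant frame $\{\partial_0,e_1,e_2,e_3\}$ with $[e_i,e_j]=\sum_k\varepsilon_{ijk}e_k$ and $g=\mathrm{diag}(g_{00},g_{11},g_{22},g_{33})$; along the flow $g_{00}g_{11}g_{22}g_{33}=\det h$. *)

(* Defs.v *)
From Stdlib Require Import Reals Lra.
Open Scope R_scope.

Definition p_poly (x y z : R) : R :=
  x^4 - x^3*(y+z) + x^2*y*z + x*(-(y^3) + y^2*z + y*z^2 - z^3)
  + y^4 - y^3*z - y*z^3 + z^4.

Definition q_poly (x y z : R) : R :=
  5*x^4 - 3*x^3*(y+z) + x^2*y*z + x*(y^3 - y^2*z - y*z^2 + z^3)
  - 3*y^4 + 3*y^3*z + 3*y*z^3 - 3*z^4.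

Definition deth (h0 h1 h2 h3 : R) : R := h0*h1*h2*h3.

Definition beta (h0 h1 h2 h3 : R) : R := 1 / (6 * (deth h0 h1 h2 h3)^2).

Definition solves_S3_global (h0 h1 h2 h3 : R) (g0 g1 g2 g3 : R -> R) : Prop :=
  g0 0 = h0 /\ g1 0 = h1 /\ g2 0 = h2 /\ g3 0 = h3 /\
  (forall eps, 0 < eps -> exists delta, 0 < delta /\
     forall t, 0 <= t < delta ->
       Rabs (g0 t - h0) < eps /\ Rabs (g1 t - h1) < eps /\
       Rabs (g2 t - h2) < eps /\ Rabs (g3 t - h3) < eps) /\
  (forall t, 0 < t ->
     let b := beta h0 h1 h2 h3 in
     derivable_pt_lim g0 t (- b * p_poly (g1 t) (g2 t) (g3 t) * (g0 t)^3) /\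
     derivable_pt_lim g1 t (- b * q_poly (g1 t) (g2 t) (g3 t) * (g0 t)^2 * g1 t) /\
     derivable_pt_lim g2 t (- b * q_poly (g2 t) (g3 t) (g1 t) * (g0 t)^2 * g2 t) /\
     derivable_pt_lim g3 t (- b * q_poly (g3 t) (g1 t) (g2 t) * (g0 t)^2 * g3 t)).

Definition cv_infty_to (f : R -> R) (L : R) : Prop :=
  forall eps, 0 < eps -> exists T, forall t, T <= t -> Rabs (f t - L) < eps.

Definition incr_on_nonneg (f : R -> R) : Prop :=
  forall s t, 0 <= s -> s < t -> f s < f t.
Definition decr_on_nonneg (f : R -> R) : Prop :=
  forall s t, 0 <= s -> s < t -> f t < f s.

(* Main.v *)
Require Import Defs.
From Stdlib Require Import Reals.
From Stdlib Require Import Lra Lia Psatz ClassicalEpsilon Ranalysis5.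
From Coquelicot Require Import Coquelicot.
Open Scope R_scope.

Lemma mvt_lim (f f' : R -> R) a b : a < b ->
  (forall c, a < c < b -> derivable_pt_lim f c (f' c)) ->
  (forall c, a <= c <= b -> continuity_pt f c) ->
  exists c, a < c < b /\ f b - f a = f' c * (b - a).
Proof.
  intros Hab Hd Hc.
  pose (pr1 := fun c (P : a < c < b) => exist (fun l => derivable_pt_lim f c l) (f' c) (Hd c P) : derivable_pt f c).
  assert (pr2 : forall c, a < c < b -> derivable_pt id c).
  { intros c _. apply derivable_pt_id. }
  destruct (MVT f id a b pr1 pr2 Hab Hc) as [c [P HP]].
  { intros c _. apply derivable_continuous_pt, derivable_pt_id. }
  exists c. split; [exact P|].
  unfold pr1 in HP. simpl in HP.
  rewrite (derive_pt_eq_0 id c 1 (pr2 c P) (derivable_pt_lim_id c)) in HP.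
  unfold id in HP. lra.
Qed.

Lemma mono_le (f f' : R -> R) a b : a <= b ->
  (forall c, a < c < b -> derivable_pt_lim f c (f' c)) ->
  (forall c, a <= c <= b -> continuity_pt f c) ->
  (forall c, a < c < b -> 0 <= f' c) -> f a <= f b.
Proof.
  intros Hab Hd Hc Hp. destruct (Req_dec a b) as [->|Hne]; [lra|].
  destruct (mvt_lim f f' a b) as [c [Hc1 Hc2]]; try lra; auto.
  specialize (Hp c Hc1). nra.
Qed.

Lemma mono_lt (f f' : R -> R) a b : a < b ->
  (forall c, a < c < b -> derivable_pt_lim f c (f' c)) ->
  (forall c, a <= c <= b -> continuity_pt f c) ->
  (forall c, a < c < b -> 0 < f' c) -> f a < f b.
Proof.
  intros Hab Hd Hc Hp.
  destruct (mvt_lim f f' a b) as [c [Hc1 Hc2]]; try lra; auto.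
  specialize (Hp c Hc1). nra.
Qed.

Lemma mono_eq (f f' : R -> R) a b : a <= b ->
  (forall c, a < c < b -> derivable_pt_lim f c (f' c)) ->
  (forall c, a <= c <= b -> continuity_pt f c) ->
  (forall c, a < c < b -> f' c = 0) -> f a = f b.
Proof.
  intros Hab Hd Hc Hp. destruct (Req_dec a b) as [->|Hne]; [lra|].
  destruct (mvt_lim f f' a b) as [c [Hc1 Hc2]]; try lra; auto.
  rewrite (Hp c Hc1) in Hc2. lra.
Qed.

Lemma test (y : R -> R) (y' : R) t k : derivable_pt_lim y t y' ->
  derivable_pt_lim (fun s => (y s)^2 * exp (k * s)) t (2 * y t * y' * exp (k*t) + (y t)^2 * (k * exp (k * t))).
Proof.
  intros H. apply is_derive_Reals. 
  assert (Hy : is_derive y t y') by (apply is_derive_Reals; exact H).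
  auto_derive.
  - exists y'. exact Hy.
  - replace (Derive (fun x => y x) t) with y' by (symmetry; apply is_derive_unique; exact Hy). ring.
Qed.

Definition rcont0 (f : R -> R) := forall eps, 0 < eps -> exists delta, 0 < delta /\
  forall t, 0 <= t < delta -> Rabs (f t - f 0) < eps.

Definition hat (f : R -> R) (t : R) := f (Rmax 0 t).

Lemma cpt_iff f x : continuity_pt f x <-> continuous f x.
Proof. rewrite continuity_pt_filterlim. tauto. Qed.

Lemma hat_eq f t : 0 <= t -> hat f t = f t.
Proof. intros. unfold hat. rewrite Rmax_right; auto. Qed.

Lemma hat_deriv f t l : 0 < t -> derivable_pt_lim f t l -> derivable_pt_lim (hat f) t l.
Proof.
  intros Ht Hd. apply is_derive_Reals. apply is_derive_Reals in Hd.
  apply (is_derive_ext_loc f); auto.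
  apply (locally_interval _ t 0 p_infty); simpl; auto.
  intros y Hy _. unfold hat. rewrite Rmax_right; lra.
Qed.

Lemma hat_cont f : rcont0 f -> (forall t, 0 < t -> exists l, derivable_pt_lim f t l) ->
  forall t, continuity_pt (hat f) t.
Proof.
  intros Hr Hd t.
  destruct (Rlt_or_le 0 t) as [Ht|Ht].
  - destruct (Hd t Ht) as [l Hl].
    apply (hat_deriv f t l Ht) in Hl. apply derivable_continuous_pt. exists l; exact Hl.
  - destruct (Rlt_or_le t 0) as [Ht'|Ht'].
    + apply cpt_iff. apply (continuous_ext_loc _ (fun _ => f 0)).
      * apply (locally_interval _ t m_infty 0); simpl; auto.
        intros y _ Hy. unfold hat. rewrite Rmax_left; lra.
      * apply continuous_const.
    + assert (t = 0) by lra. subst t.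
      intros eps Heps. destruct (Hr eps Heps) as [d [Hd0 Hd1]].
      exists d. split; auto. intros x [_ Hx]. unfold dist; simpl; unfold Rdist.
      unfold hat. rewrite (Rmax_left 0 0) by lra.
      destruct (Rle_dec 0 x).
      * rewrite Rmax_right by lra. apply Hd1. split; auto.
        simpl in Hx. unfold Rdist in Hx. rewrite Rminus_0_r in Hx. apply Rabs_def2 in Hx. lra.
      * rewrite Rmax_left by lra. rewrite Rminus_diag, Rabs_R0. lra.
Qed.

Definition good (f f' : R -> R) :=
  (forall t, continuity_pt f t) /\ (forall t, 0 < t -> derivable_pt_lim f t (f' t)).

Lemma good_le f f' a b : 0 <= a <= b -> good f f' -> (forall c, a < c < b -> 0 <= f' c) -> f a <= f b.
Proof. intros Hab [Hc Hd] Hp. apply (mono_le f f'); auto; try lra. intros c Hc'; apply Hd; lra. Qed.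
Lemma good_lt f f' a b : 0 <= a -> a < b -> good f f' -> (forall c, a < c < b -> 0 < f' c) -> f a < f b.
Proof. intros Ha Hab [Hc Hd] Hp. apply (mono_lt f f'); auto. intros c Hc'; apply Hd; lra. Qed.
Lemma good_eq f f' a b : 0 <= a <= b -> good f f' -> (forall c, a < c < b -> f' c = 0) -> f a = f b.
Proof. intros Hab [Hc Hd] Hp. apply (mono_eq f f'); auto; try lra. intros c Hc'; apply Hd; lra. Qed.

Lemma good_opp f f' : good f f' -> good (fun s => - f s) (fun s => - f' s).
Proof.
  intros [Hc Hd]; split.
  - intros t; apply continuity_pt_opp, Hc.
  - intros t Ht; apply derivable_pt_lim_opp, Hd, Ht.
Qed.
Lemma good_ge f f' a b : 0 <= a <= b -> good f f' -> (forall c, a < c < b -> f' c <= 0) -> f b <= f a.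
Proof.
  intros Hab Hg Hp. pose proof (good_le _ _ a b Hab (good_opp f f' Hg)) as H.
  cbv beta in H. enough (- f a <= - f b) by lra. apply H. intros c Hc; specialize (Hp c Hc); lra.
Qed.

Lemma good_sq_exp y y' k : good y y' ->
  good (fun s => (y s)^2 * exp (k * s)) (fun s => 2 * y s * y' s * exp (k*s) + (y s)^2 * (k * exp (k * s))).
Proof.
  intros [Hc Hd]. split.
  - intros t. apply continuity_pt_mult. apply continuity_pt_mult; [apply Hc|].
    apply continuity_pt_mult; [apply Hc| apply continuity_pt_const; intros ??; reflexivity].
    apply (continuity_pt_comp (fun s => k * s) exp).
    + apply continuity_pt_mult; [apply continuity_pt_const; intros ??; reflexivity| apply derivable_continuous_pt, derivable_pt_id].
    + apply derivable_continuous_pt, derivable_pt_exp.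
  - intros t Ht. apply test. apply Hd; auto.
Qed.

Lemma gronwall_bounds y y' Rf t : good y y' -> (forall t, continuity_pt Rf t) ->
  (forall t, 0 < t -> y' t = y t * Rf t) -> 0 <= t ->
  exists M, 0 <= M /\ forall s, 0 <= s <= t ->
    (y s)^2 * exp (-(2*M) * s) <= (y 0)^2 /\ (y 0)^2 <= (y s)^2 * exp ((2*M) * s).
Proof.
  intros Hg HR Hy Ht.
  destruct (continuity_ab_maj (fun s => Rabs (Rf s)) 0 t Ht) as [m [Hm _]].
  { intros c _. apply (continuity_pt_comp Rf Rabs); auto. apply Rcontinuity_abs. }
  set (M := Rabs (Rf m)).
  assert (HM : forall s, 0 <= s <= t -> Rabs (Rf s) <= M) by (intros; apply Hm; auto).
  assert (HM0 : 0 <= M) by apply Rabs_pos.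
  exists M. split; auto. intros s Hs. split.
  - pose proof (good_ge _ _ 0 s (conj (Rle_refl 0) (proj1 Hs)) (good_sq_exp y y' (-(2*M)) Hg)) as H.
    cbv beta in H. rewrite Rmult_0_r, exp_0, Rmult_1_r in H. apply H.
    intros c Hc. rewrite Hy by lra.
    assert (Hb := HM c ltac:(lra)). apply Rabs_le_between in Hb.
    assert (0 < exp (- (2 * M) * c)) by apply exp_pos.
    assert (0 <= (y c)^2) by (apply pow2_ge_0).
    assert (E : 2 * y c * (y c * Rf c) * exp (- (2 * M) * c) + y c ^ 2 * (- (2 * M) * exp (- (2 * M) * c)) = 2 * (y c ^2 * exp (- (2 * M) * c)) * (Rf c - M)) by ring.
    rewrite E. assert (0 <= y c ^2 * exp (- (2 * M) * c)) by (apply Rmult_le_pos; lra). nra.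
  - pose proof (good_le _ _ 0 s (conj (Rle_refl 0) (proj1 Hs)) (good_sq_exp y y' (2*M) Hg)) as H.
    cbv beta in H. rewrite Rmult_0_r, exp_0, Rmult_1_r in H. apply H.
    intros c Hc. rewrite Hy by lra.
    assert (Hb := HM c ltac:(lra)). apply Rabs_le_between in Hb.
    assert (0 < exp ((2 * M) * c)) by apply exp_pos.
    assert (0 <= (y c)^2) by (apply pow2_ge_0).
    assert (E : 2 * y c * (y c * Rf c) * exp ((2 * M) * c) + y c ^ 2 * ((2 * M) * exp ((2 * M) * c)) = 2 * (y c ^2 * exp ((2 * M) * c)) * (Rf c + M)) by ring.
    rewrite E. assert (0 <= y c ^2 * exp ((2 * M) * c)) by (apply Rmult_le_pos; lra). nra.
Qed.

Lemma gronwall y y' Rf : good y y' -> (forall t, continuity_pt Rf t) ->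
  (forall t, 0 < t -> y' t = y t * Rf t) ->
  forall t, 0 <= t -> (y 0 = 0 -> y t = 0) /\ (0 < y 0 -> 0 < y t).
Proof.
  intros Hg HR Hy t Ht.
  destruct (gronwall_bounds y y' Rf t Hg HR Hy Ht) as [M [HM0 HB]].
  split.
  - intros H0. destruct (HB t (conj Ht (Rle_refl t))) as [H1 _].
    rewrite H0 in H1. assert (0 < exp (- (2 * M) * t)) by apply exp_pos.
    assert (0 <= (y t)^2) by apply pow2_ge_0.
    assert ((y t)^2 = 0) by nra. nra.
  - intros H0. destruct (Rlt_or_le 0 (y t)) as [|Hn]; auto. exfalso.
    destruct (Req_dec (y t) 0) as [Hz|Hz].
    + destruct (HB t (conj Ht (Rle_refl t))) as [_ H1]. rewrite Hz in H1. simpl in H1. nra.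
    + destruct (IVT (fun s => - y s) 0 t) as [z [Hz1 Hz2]].
      * intros x. apply continuity_pt_opp. apply (proj1 Hg).
      * destruct Ht; auto. subst. lra.
      * lra.
      * lra.
      * destruct (HB z Hz1) as [_ H1]. assert (y z = 0) by lra. rewrite H in H1. simpl in H1. nra.
Qed.


Lemma inv_deriv (G phi : R -> R) (t d delta : R) :
  0 < delta -> (forall s, Rabs (s - t) < delta -> G (phi s) = s) ->
  continuity_pt phi t -> derivable_pt_lim G (phi t) d -> d <> 0 ->
  derivable_pt_lim phi t (/ d).
Proof.
  intros Hdel Hinv Hc HG Hd eps Heps.
  assert (Had : 0 < Rabs d) by (apply Rabs_pos_lt; auto).
  set (eta := Rmin (Rabs d / 2) (eps * (Rabs d * Rabs d) / 2)).
  assert (Heta : 0 < eta).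
  { unfold eta. apply Rmin_pos; [lra|]. apply Rmult_lt_0_compat; [|lra]. apply Rmult_lt_0_compat; nra. }
  destruct (HG eta Heta) as [d1 Hd1].
  destruct (Hc d1 (cond_pos d1)) as [d2 [Hd2 Hd2']].
  assert (Hd2pos : 0 < Rmin d2 delta) by (apply Rmin_pos; lra).
  exists (mkposreal _ Hd2pos). intros h Hh0 Hh. simpl in Hh.
  assert (Hh2 : Rabs h < d2) by (eapply Rlt_le_trans; [exact Hh| apply Rmin_l]).
  assert (Hh3 : Rabs h < delta) by (eapply Rlt_le_trans; [exact Hh| apply Rmin_r]).
  assert (E1 : G (phi (t + h)) = t + h) by (apply Hinv; replace (t + h - t) with h by ring; auto).
  assert (E0 : G (phi t) = t) by (apply Hinv; rewrite Rminus_diag, Rabs_R0; auto).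
  set (k := phi (t + h) - phi t).
  assert (Hk0 : k <> 0).
  { intro Hk. unfold k in Hk. assert (phi (t + h) = phi t) by lra. rewrite H in E1. lra. }
  assert (Hk : Rabs k < d1).
  { unfold k. destruct (Req_dec h 0) as [->|Hne]; [lra|].
    specialize (Hd2' (t + h)). simpl in Hd2'. unfold R_dist in Hd2'. apply Hd2'. split.
    - unfold D_x, no_cond. split; auto. lra.
    - replace (t + h - t) with h by ring. auto. }
  specialize (Hd1 k Hk0 Hk).
  assert (EG : G (phi t + k) = t + h) by (unfold k; replace (phi t + (phi (t + h) - phi t)) with (phi (t + h)) by ring; auto).
  rewrite EG, E0 in Hd1. replace (t + h - t) with h in Hd1 by ring.
  fold k.
  assert (Hq : Rabs (h / k - d) < Rabs d / 2) by (eapply Rlt_le_trans; [exact Hd1| apply Rmin_l]).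
  assert (Hq2 : Rabs (h / k - d) < eps * (Rabs d * Rabs d) / 2) by (eapply Rlt_le_trans; [exact Hd1| apply Rmin_r]).
  set (q := h / k) in *.
  assert (Hqa : Rabs d / 2 < Rabs q).
  { pose proof (Rabs_triang_inv d (d - q)). replace (d - (d - q)) with q in H by ring.
    rewrite <- Rabs_Ropp in Hq. replace (- (q - d)) with (d - q) in Hq by ring. lra. }
  assert (Hq0 : q <> 0) by (intro; subst; rewrite H, Rabs_R0 in Hqa; lra).
  replace (k / h) with (/ q) by (unfold q; field; split; auto).
  replace (/ q - / d) with ((d - q) / (q * d)) by (field; auto).
  unfold Rdiv. rewrite Rabs_mult, Rabs_inv, Rabs_mult.
  rewrite <- Rabs_Ropp. replace (- (d - q)) with (q - d) by ring.
  assert (Hpos : 0 < Rabs q * Rabs d) by nra.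
  assert (Hm1 : eps * Rabs d * (Rabs d / 2) < eps * Rabs d * Rabs q) by (apply Rmult_lt_compat_l; nra).
  assert (Hm : Rabs (q - d) < eps * (Rabs q * Rabs d)) by nra.
  apply (Rmult_lt_reg_r (Rabs q * Rabs d)); auto.
  rewrite Rmult_assoc, Rinv_l by lra. lra.
Qed.

Lemma exist1d (Phi : R -> R) (lo x0 : R) :
  lo < x0 < 1 ->
  (forall x, lo < x <= 1 -> continuity_pt Phi x /\ 0 < Phi x) ->
  exists phi : R -> R,
    phi 0 = x0 /\
    (forall t, 0 <= t -> x0 <= phi t < 1) /\
    (forall t, 0 <= t -> forall eps, 0 < eps -> exists delta, 0 < delta /\
        forall s, 0 <= s -> Rabs (s - t) < delta -> Rabs (phi s - phi t) < eps) /\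
    (forall t, 0 < t -> derivable_pt_lim phi t ((1 - phi t) * Phi (phi t))).
Proof.
  intros Hx0 HPhi.
  set (f := fun x => / ((1 - x) * Phi x)).
  assert (Hfc : forall x, lo < x < 1 -> continuous f x /\ 0 < f x).
  { intros x Hx. destruct (HPhi x ltac:(lra)) as [Hc Hp]. split.
    - unfold f. apply continuous_comp.
      + apply (continuous_mult (fun x => 1 - x) Phi).
        * apply (continuous_minus (fun _ => 1) (fun x => x)); [apply continuous_const|apply continuous_id].
        * apply cpt_iff; auto.
      + apply (continuity_pt_filterlim Rinv). apply continuity_pt_inv; [apply continuity_pt_id|].
        apply Rgt_not_eq, Rlt_gt. apply Rmult_lt_0_compat; lra. 
    - unfold f. apply Rinv_0_lt_compat, Rmult_lt_0_compat; lra. }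
  set (G := (fun x => RInt f x0 x) : R -> R).
  assert (Hex : forall b, lo < b < 1 -> ex_RInt f x0 b).
  { intros b Hb. apply (ex_RInt_continuous (V:=R_CompleteNormedModule)). intros z Hz.
    apply Hfc. split.
    - apply Rlt_le_trans with (Rmin x0 b); [apply Rmin_glb_lt; lra| lra].
    - apply Rle_lt_trans with (Rmax x0 b); [lra| apply Rmax_lub_lt; lra]. }
  assert (HGd : forall x, lo < x < 1 -> derivable_pt_lim G x (f x)).
  { intros x Hx. apply is_derive_Reals. apply is_derive_RInt with x0.
    - apply (locally_interval _ x lo 1); simpl; try lra.
      intros y Hy1 Hy2. unfold G. apply (RInt_correct (V:=R_CompleteNormedModule)), Hex; lra.
    - apply Hfc; auto. }
  assert (HGc : forall x, lo < x < 1 -> continuity_pt G x).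
  { intros x Hx. apply derivable_continuous_pt. exists (f x). apply HGd; auto. }
  assert (HG0 : G x0 = 0) by (unfold G; rewrite RInt_point; reflexivity).
  assert (HGi : forall x y, lo < x -> x < y -> y < 1 -> G x < G y).
  { intros x y Hx Hxy Hy.
    apply (incr_function G lo 1 f); simpl; auto; try lra.
    - intros z Hz1 Hz2. apply is_derive_Reals, HGd; lra.
    - intros z Hz1 Hz2. apply Hfc; lra. }
  destruct (continuity_ab_maj Phi x0 1 ltac:(lra)) as [m [Hm Hm1]].
  { intros c Hc. apply HPhi; lra. }
  set (K := Phi m).
  assert (HK : 0 < K) by (apply HPhi; lra).
  assert (HGlow : forall x, x0 <= x < 1 -> (ln (1 - x0) - ln (1 - x)) / K <= G x).
  { intros x Hx.
    set (H := fun y => G y + ln (1 - y) / K).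
    assert (Hd : forall y, lo < y < 1 -> derivable_pt_lim H y (f y - / (K * (1 - y)))).
    { intros y Hy. apply is_derive_Reals. unfold H.
      apply (is_derive_plus G (fun y => ln (1 - y) / K)); [apply is_derive_Reals, HGd; auto|].
      auto_derive; [lra|]. field. split; lra. }
    assert (Hle : H x0 <= H x).
    { apply (mono_le H (fun y => f y - / (K * (1 - y)))); try lra.
      - intros c Hc; apply Hd; lra.
      - intros c Hc. apply derivable_continuous_pt. exists (f c - / (K * (1 - c))). apply Hd; lra.
      - intros c Hc. unfold f. destruct (HPhi c ltac:(lra)) as [_ Hp].
        assert (Phi c <= K) by (apply Hm; lra).
        enough (/ (K * (1 - c)) <= / ((1 - c) * Phi c)) by lra.
        apply Rinv_le_contravar. apply Rmult_lt_0_compat; lra.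
        assert (0 < 1 - c) by lra. nra. }
    unfold H in Hle. rewrite HG0 in Hle. unfold Rdiv in *. lra. }
  assert (Hsurj : forall t, 0 <= t -> exists x, x0 <= x < 1 /\ G x = t).
  { intros t Ht. destruct Ht as [Ht|Ht]; [| subst; exists x0; split; [lra| auto]].
    set (x1 := 1 - (1 - x0) * exp (- K * t)).
    assert (He : 0 < exp (-K * t) < 1).
    { split; [apply exp_pos|]. rewrite <- exp_0. apply exp_increasing. nra. }
    assert (Hx1 : x0 < x1 < 1) by (unfold x1; split; nra).
    assert (HGx1 : t <= G x1).
    { eapply Rle_trans; [|apply HGlow; lra].
      unfold x1. replace (1 - (1 - (1 - x0) * exp (- K * t))) with ((1 - x0) * exp (- K * t)) by ring.
      rewrite ln_mult by lra. rewrite ln_exp. right. field. lra. }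
    destruct (f_interv_is_interv G x0 x1 t ltac:(lra) ltac:(lra)) as [x [Hx1' Hx2']].
    { intros x Hx. apply HGc; lra. }
    exists x; split; auto; lra. }
  set (phi := fun t => epsilon (inhabits 0) (fun x => x0 <= x < 1 /\ G x = Rmax 0 t)).
  assert (Hphi : forall t, 0 <= t -> x0 <= phi t < 1 /\ G (phi t) = t).
  { intros t Ht. unfold phi. rewrite Rmax_right by auto.
    apply epsilon_spec. apply Hsurj; auto. }
  assert (Hinj : forall x y, x0 <= x < 1 -> x0 <= y < 1 -> G x = G y -> x = y).
  { intros x y Hx Hy E. destruct (Rtotal_order x y) as [H|[H|H]]; auto.
    - pose proof (HGi x y ltac:(lra) H ltac:(lra)); lra.
    - pose proof (HGi y x ltac:(lra) H ltac:(lra)); lra. }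
  assert (Hmono : forall s t, 0 <= s -> 0 <= t -> phi s < phi t -> s < t).
  { intros s t Hs Ht H. destruct (Hphi s Hs) as [Hs1 Hs2]. destruct (Hphi t Ht) as [Ht1 Ht2].
    pose proof (HGi (phi s) (phi t) ltac:(lra) H ltac:(lra)). lra. }
  assert (Hcont : forall t, 0 <= t -> forall eps, 0 < eps -> exists delta, 0 < delta /\
        forall s, 0 <= s -> Rabs (s - t) < delta -> Rabs (phi s - phi t) < eps).
  { intros t Ht eps Heps.
    destruct (Hphi t Ht) as [Hpt1 Hpt2].
    set (e := Rmin eps ((1 - phi t) / 2)).
    assert (He : 0 < e) by (apply Rmin_pos; lra).
    assert (He1 : e <= eps) by apply Rmin_l.
    assert (He2 : e <= (1 - phi t) / 2) by apply Rmin_r.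
    set (du := G (phi t + e) - t).
    assert (Hdu : 0 < du) by (unfold du; rewrite <- Hpt2 at 2; pose proof (HGi (phi t) (phi t + e)); lra).
    destruct (Rlt_or_le (phi t - e) x0) as [Hl|Hl].
    - exists du. split; auto. intros s Hs Hst.
      destruct (Hphi s Hs) as [Hps1 Hps2].
      apply Rabs_def1.
      + destruct (Rlt_or_le (phi s) (phi t + e)) as [|Hge]; [lra|].
        exfalso. assert (G (phi t + e) <= G (phi s)).
        { destruct Hge as [Hge|Hge]; [left; apply HGi; lra| rewrite Hge; lra]. }
        apply Rabs_def2 in Hst. unfold du in Hst. lra.
      + lra.
    - set (dl := t - G (phi t - e)).
      assert (Hdl : 0 < dl) by (unfold dl; rewrite <- Hpt2 at 1; pose proof (HGi (phi t - e) (phi t)); lra).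
      exists (Rmin du dl). split; [apply Rmin_pos; auto|]. intros s Hs Hst.
      assert (Hst1 : Rabs (s - t) < du) by (eapply Rlt_le_trans; [exact Hst| apply Rmin_l]).
      assert (Hst2 : Rabs (s - t) < dl) by (eapply Rlt_le_trans; [exact Hst| apply Rmin_r]).
      apply Rabs_def2 in Hst1. apply Rabs_def2 in Hst2.
      destruct (Hphi s Hs) as [Hps1 Hps2].
      apply Rabs_def1.
      + destruct (Rlt_or_le (phi s) (phi t + e)) as [|Hge]; [lra|].
        exfalso. assert (G (phi t + e) <= G (phi s)).
        { destruct Hge as [Hge|Hge]; [left; apply HGi; lra| rewrite Hge; lra]. }
        unfold du in Hst1. lra.
      + destruct (Rlt_or_le (phi t - e) (phi s)) as [|Hge]; [lra|].
        exfalso. assert (G (phi s) <= G (phi t - e)).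
        { destruct Hge as [Hge|Hge]; [left; apply HGi; lra| rewrite Hge; lra]. }
        unfold dl in Hst2. lra. }
  exists phi. split; [|split; [|split]].
  - destruct (Hphi 0 (Rle_refl 0)) as [H1 H2]. apply Hinj; auto; lra.
  - intros t Ht; apply Hphi; auto.
  - exact Hcont.
  - intros t Ht. destruct (Hphi t ltac:(lra)) as [Hpt1 Hpt2].
    assert (Hf : 0 < f (phi t)) by (apply Hfc; lra).
    replace ((1 - phi t) * Phi (phi t)) with (/ f (phi t)).
    2:{ unfold f. rewrite Rinv_inv. reflexivity. }
    apply (inv_deriv G phi t (f (phi t)) t); auto; try lra.
    + intros s Hs. apply Rabs_def2 in Hs. apply Hphi. lra.
    + intros eps Heps. destruct (Hcont t ltac:(lra) eps Heps) as [d [Hd Hd']].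
      exists (Rmin d t). split; [apply Rmin_pos; lra|].
      intros x [[_ Hx1] Hx2]. simpl in *. unfold R_dist in *.
      apply Hd'.
      * apply Rabs_def2 in Hx2. pose proof (Rmin_r d t). lra.
      * eapply Rlt_le_trans; [exact Hx2| apply Rmin_l].
    + apply HGd. lra.
Qed.

Definition cfun (Kc r : R) := exp (ln (Kc * (4 - r) / r^5) / 8).
Definition cder (Kc r : R) := cfun Kc r * (- / (4 - r) - 5 / r) / 8.
Definition Phi1 (b D Kc r : R) := 2 * b * D^2 / r^3 * (4 - r) / (cfun Kc r)^2.

Lemma cfun_pos Kc r : 0 < cfun Kc r.
Proof. apply exp_pos. Qed.

Lemma cfun_deriv Kc r : 0 < Kc -> 0 < r < 4 -> is_derive (cfun Kc) r (cder Kc r).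
Proof.
  intros HK Hr. unfold cfun, cder. auto_derive.
 - assert (0 < r^5) by (apply pow_lt; lra). simpl in H. split; [lra|split; auto].
    apply Rmult_lt_0_compat; [nra| apply Rinv_0_lt_compat; lra].
  - unfold cfun, Rdiv, Rminus. simpl pow. field. repeat split; lra.
Qed.

Lemma cont_of_derive (f : R -> R) x : ex_derive f x -> continuity_pt f x.
Proof. intros H. apply cpt_iff. apply (ex_derive_continuous (K:=R_AbsRing) (V:=R_NormedModule)). exact H. Qed.

Lemma Phi1_ok b D Kc r : 0 < b -> 0 < D -> 0 < Kc -> 0 < r < 4 ->
  continuity_pt (Phi1 b D Kc) r /\ 0 < Phi1 b D Kc r.
Proof.
  intros Hb HD HK Hr. split.
  - apply cont_of_derive. unfold Phi1, cfun. auto_derive.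
    assert (0 < r^5) by (apply pow_lt; lra). simpl in H.
    assert (0 < exp (ln (Kc * (4 + - r) * / (r * (r * (r * (r * (r * 1)))))) * / 8)) by apply exp_pos.
    assert (0 < Kc * (4 + - r) * / (r * (r * (r * (r * (r * 1)))))) by (apply Rmult_lt_0_compat; [nra| apply Rinv_0_lt_compat; lra]).
    repeat split; try lra; nra.
  - unfold Phi1. pose proof (cfun_pos Kc r).
    apply Rdiv_lt_0_compat; [|apply pow_lt; lra].
    apply Rmult_lt_0_compat; [|lra]. apply Rdiv_lt_0_compat; [|apply pow_lt; lra].
    apply Rmult_lt_0_compat; [lra| apply pow_lt; lra].
Qed.

Lemma rcont_comp (R0 H : R -> R) : rcont0 R0 -> continuity_pt H (R0 0) -> rcont0 (fun t => H (R0 t)).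
Proof.
  intros HR HH eps Heps. destruct (HH eps Heps) as [d [Hd Hd']].
  destruct (HR d Hd) as [d2 [Hd2 Hd2']]. exists d2; split; auto.
  intros t Ht. destruct (Req_dec (R0 t) (R0 0)) as [E|E].
  - rewrite E, Rminus_diag, Rabs_R0; lra.
  - apply (Hd' (R0 t)). split; [split; [exact I| auto]|]. apply Hd2'; auto.
Qed.

Lemma build b D Kc (R0 : R -> R) : 0 < b -> 0 < D -> 0 < Kc ->
  (forall t, 0 <= t -> 0 < R0 t < 4) -> rcont0 R0 ->
  (forall t, 0 < t -> derivable_pt_lim R0 t ((1 - R0 t) * Phi1 b D Kc (R0 t))) ->
  let C := fun t => cfun Kc (R0 t) in
  let A := fun t => R0 t * C t in
  let G0 := fun t => D / ((A t)^2 * C t) in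
  rcont0 C /\ rcont0 A /\ rcont0 G0 /\
  (forall t, 0 < t ->
     derivable_pt_lim C t (- b * ((C t)^2 * (A t - C t) * (A t - 5 * C t)) * (G0 t)^2 * C t) /\
     derivable_pt_lim A t (- b * (- ((C t)^2 * (A t - C t) * (A t - 3 * C t))) * (G0 t)^2 * A t) /\
     derivable_pt_lim G0 t (- b * ((C t)^2 * (A t - C t)^2) * (G0 t)^3)).
Proof.
  intros Hb HD HK HR Hrc Hd C A G0.
  destruct (HR 0 (Rle_refl 0)) as [Hr1 Hr2].
  assert (Hcc : forall r, 0 < r < 4 -> continuity_pt (cfun Kc) r).
  { intros r Hr. apply cont_of_derive. exists (cder Kc r). apply cfun_deriv; auto. }
  split; [|split; [|split]].
  - apply (rcont_comp R0 (cfun Kc)); auto.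
  - apply (rcont_comp R0 (fun r => r * cfun Kc r)); auto.
    apply continuity_pt_mult; [apply continuity_pt_id| apply Hcc; auto].
  - apply (rcont_comp R0 (fun r => D / ((r * cfun Kc r)^2 * cfun Kc r))); auto.
    apply continuity_pt_div.
    + apply continuity_pt_const. intros ??; reflexivity.
    + apply continuity_pt_mult; [|apply Hcc; auto].
      apply (continuity_pt_comp (fun r => r * cfun Kc r) (fun x => x^2)).
      * apply continuity_pt_mult; [apply continuity_pt_id| apply Hcc; auto].
      * apply derivable_continuous_pt, derivable_pt_pow.
    + pose proof (cfun_pos Kc (R0 0)). apply Rgt_not_eq. apply Rmult_lt_0_compat; [apply pow_lt; nra|lra].
  - intros t Ht.
    destruct (HR t ltac:(lra)) as [Hrt1 Hrt2].
    set (r := R0 t). set (c := cfun Kc r).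
    assert (Hc : 0 < c) by apply cfun_pos.
    set (dR := (1 - r) * Phi1 b D Kc r).
    assert (HdR : is_derive R0 t dR) by (apply is_derive_Reals, Hd; auto).
    assert (HdC : is_derive C t (cder Kc r * dR)).
    { unfold C. pose proof (is_derive_comp (cfun Kc) R0 t (cder Kc r) dR (cfun_deriv Kc r HK (conj Hrt1 Hrt2)) HdR) as H.
      change (scal dR (cder Kc r)) with (dR * cder Kc r) in H. rewrite Rmult_comm. exact H. }
    assert (HdA : is_derive A t (dR * c + r * (cder Kc r * dR))).
    { unfold A. pose proof (is_derive_mult R0 C t dR (cder Kc r * dR) HdR HdC) as H.
      change (plus (mult dR (C t)) (mult (R0 t) (cder Kc r * dR))) with (dR * C t + R0 t * (cder Kc r * dR)) in H.
      apply H. intros; apply Rmult_comm. }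
    assert (HdG : is_derive G0 t (D * (- ((2 * (r * c) * (dR * c + r * (cder Kc r * dR))) * c + (r * c)^2 * (cder Kc r * dR)) / ((r*c)^2 * c)^2))).
    { unfold G0. auto_derive.
      - split; [exists (dR * c + r * (cder Kc r * dR)); exact HdA|].
        split; [exists (cder Kc r * dR); exact HdC|].
        split; auto. unfold A, C. fold r c. assert (0 < r) by exact Hrt1. assert (0 < r * c) by nra. apply Rgt_not_eq. apply Rmult_lt_0_compat; [nra| lra].
      - replace (Derive (fun x => A x) t) with (dR * c + r * (cder Kc r * dR)) by (symmetry; apply is_derive_unique; exact HdA).
        replace (Derive (fun x => C x) t) with (cder Kc r * dR) by (symmetry; apply is_derive_unique; exact HdC).
        unfold A, C. fold r c. assert (0 < r) by exact Hrt1. field. split; lra. }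
    assert (E4 : 4 - r <> 0) by (unfold r; lra). assert (Er : r <> 0) by (unfold r; lra).
    unfold dR, Phi1, cder in HdC, HdA, HdG. fold c in HdC, HdA, HdG.
    unfold G0, A, C. fold r c.
    split; [|split]; apply is_derive_Reals.
    + eapply is_derive_ext; [intros; reflexivity|]. replace (- b * (c ^ 2 * (r * c - c) * (r * c - 5 * c)) * (D / ((r * c) ^ 2 * c)) ^ 2 * c) with (c * (- / (4 - r) - 5 / r) / 8 * ((1 - r) * (2 * b * D ^ 2 / r ^ 3 * (4 - r) / c ^ 2))).
      exact HdC. field. repeat split; lra.
    + replace (- b * - (c ^ 2 * (r * c - c) * (r * c - 3 * c)) * (D / ((r * c) ^ 2 * c)) ^ 2 * (r * c)) with ((1 - r) * (2 * b * D ^ 2 / r ^ 3 * (4 - r) / c ^ 2) * c + r * (c * (- / (4 - r) - 5 / r) / 8 * ((1 - r) * (2 * b * D ^ 2 / r ^ 3 * (4 - r) / c ^ 2)))).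
      exact HdA. field. repeat split; lra.
    + match type of HdG with is_derive _ _ ?X => replace (- b * (c ^ 2 * (r * c - c) ^ 2) * (D / ((r * c) ^ 2 * c)) ^ 3) with X end.
      exact HdG. field. repeat split; lra.
Qed.

Lemma cfun_at Kc r c : 0 < c -> Kc * (4 - r) / r^5 = c^8 -> cfun Kc r = c.
Proof.
  intros Hc E. unfold cfun. rewrite E. rewrite ln_pow by auto.
  replace (INR 8 * ln c / 8) with (ln c) by (simpl; field). apply exp_ln; auto.
Qed.

Lemma rcont4 (g0 g1 g2 g3 : R -> R) : rcont0 g0 -> rcont0 g1 -> rcont0 g2 -> rcont0 g3 ->
  forall eps, 0 < eps -> exists delta, 0 < delta /\ forall t, 0 <= t < delta ->
       Rabs (g0 t - g0 0) < eps /\ Rabs (g1 t - g1 0) < eps /\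
       Rabs (g2 t - g2 0) < eps /\ Rabs (g3 t - g3 0) < eps.
Proof.
  intros H0 H1 H2 H3 eps He.
  destruct (H0 eps He) as [d0 [Hd0 Hd0']]. destruct (H1 eps He) as [d1 [Hd1 Hd1']].
  destruct (H2 eps He) as [d2 [Hd2 Hd2']]. destruct (H3 eps He) as [d3 [Hd3 Hd3']].
  exists (Rmin (Rmin d0 d1) (Rmin d2 d3)). split.
  - repeat apply Rmin_pos; auto.
  - intros t [Ht1 Ht2].
    pose proof (Rmin_l (Rmin d0 d1) (Rmin d2 d3)). pose proof (Rmin_r (Rmin d0 d1) (Rmin d2 d3)).
    pose proof (Rmin_l d0 d1). pose proof (Rmin_r d0 d1). pose proof (Rmin_l d2 d3). pose proof (Rmin_r d2 d3).
    repeat split; [apply Hd0'|apply Hd1'|apply Hd2'|apply Hd3']; lra.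
Qed.

Lemma p_AAC a c : p_poly a a c = c^2 * (a - c)^2.
Proof. unfold p_poly. ring. Qed.
Lemma p_CAA a c : p_poly c a a = c^2 * (a - c)^2.
Proof. unfold p_poly. ring. Qed.
Lemma q_AAC a c : q_poly a a c = - (c^2 * (a - c) * (a - 3 * c)).
Proof. unfold q_poly. ring. Qed.
Lemma q_ACA a c : q_poly a c a = - (c^2 * (a - c) * (a - 3 * c)).
Proof. unfold q_poly. ring. Qed.
Lemma q_CAA a c : q_poly c a a = c^2 * (a - c) * (a - 5 * c).
Proof. unfold q_poly. ring. Qed.

Lemma existence (h0 h1 h2 h3 : R) :
  0 < h0 -> 0 < h1 -> 0 < h2 -> 0 < h3 ->
  ((h1 = h2 /\ h2 < h3) \/ (h1 < h2 /\ h2 = h3 /\ h3 < 4 * h1)) ->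
  exists g0 g1 g2 g3 : R -> R, solves_S3_global h0 h1 h2 h3 g0 g1 g2 g3.
Proof.
  intros H0 H1 H2 H3 Hcase.
  set (D := deth h0 h1 h2 h3).
  set (kap := (4 * D - h0 * h2^3) * h0^3 * h2).
  set (b := beta h0 h1 h2 h3).
  assert (HD : 0 < D) by (unfold D, deth; repeat apply Rmult_lt_0_compat; auto).
  assert (Hb : 0 < b).
  { unfold b, beta. fold D. apply Rdiv_lt_0_compat; [lra|]. apply Rmult_lt_0_compat; [lra| apply pow_lt; auto]. }
  assert (Hkap : 0 < kap).
  { unfold kap, D, deth.
    replace ((4 * (h0 * h1 * h2 * h3) - h0 * h2 ^ 3) * h0 ^ 3 * h2) with (h0^4 * h2^2 * (4 * h1 * h3 - h2^2)) by ring.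
    apply Rmult_lt_0_compat; [apply Rmult_lt_0_compat; apply pow_lt; auto|].
    destruct Hcase as [[E1 E2]|[E1 [E2 E3]]].
    - rewrite <- E1. assert (0 < h1 * (4 * h3 - h1)) by (apply Rmult_lt_0_compat; lra). nra.
    - rewrite <- E2. assert (0 < h2 * (4 * h1 - h2)) by (apply Rmult_lt_0_compat; lra). nra. }
  set (Kc := D^4 / kap).
  assert (HKc : 0 < Kc) by (apply Rdiv_lt_0_compat; [apply pow_lt|]; auto).
  destruct Hcase as [[E1 E2]|[E1 [E2 E3]]].
  -
    set (r0 := h1 / h3).
    assert (Hr0 : 0 < r0 < 1) by (unfold r0; split; [apply Rdiv_lt_0_compat; auto| apply (Rmult_lt_reg_r h3); auto; unfold Rdiv; rewrite Rmult_assoc, Rinv_l; lra]).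
    destruct (exist1d (Phi1 b D Kc) 0 r0) as [phi [Hp0 [Hp1 [Hp2 Hp3]]]]; [lra| |].
    { intros x Hx. apply Phi1_ok; auto; lra. }
    assert (HR : forall t, 0 <= t -> 0 < phi t < 4) by (intros t Ht; specialize (Hp1 t Ht); lra).
    assert (Hrc : rcont0 phi).
    { intros eps He. destruct (Hp2 0 (Rle_refl 0) eps He) as [d [Hd Hd']]. exists d; split; auto.
      intros t [Ht1 Ht2]. apply Hd'; auto. rewrite Rminus_0_r, Rabs_right; lra. }
    destruct (build b D Kc phi Hb HD HKc HR Hrc Hp3) as [HC [HA [HG Hder]]].
    set (C := fun t => cfun Kc (phi t)) in *.
    set (A := fun t => phi t * C t) in *.
    set (G0 := fun t => D / ((A t)^2 * C t)) in *.
    assert (HC0 : C 0 = h3).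
    { unfold C. rewrite Hp0. apply cfun_at; auto. unfold Kc, kap, r0, D, deth. rewrite <- E1. field.
      repeat split; try lra. replace (4 * (h0 * h1 * h1 * h3) - h0 * h1 ^ 3) with (h0 * h1^2 * (4 * h3 - h1)) by ring.
      apply Rgt_not_eq. repeat apply Rmult_lt_0_compat; try apply pow_lt; lra. }
    assert (HA0 : A 0 = h1) by (unfold A; rewrite HC0, Hp0; unfold r0; field; lra).
    assert (HG0 : G0 0 = h0) by (unfold G0; rewrite HA0, HC0; unfold D, deth; rewrite <- E1; field; lra).
    exists G0, A, A, C. unfold solves_S3_global.
    split; [auto|split; [auto|split; [rewrite <- E1; auto|split; [auto|split]]]].
    + pose proof (rcont4 G0 A A C HG HA HA HC) as H. rewrite HG0, HA0, HC0 in H. rewrite <- E1. exact H.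
    + intros t Ht. cbv zeta. fold b. destruct (Hder t Ht) as [DC [DA DG]].
      rewrite p_AAC, q_AAC, q_ACA, q_CAA. auto.
  -
    set (r0 := h2 / h1).
    assert (Hr0 : 1 < r0 < 4).
    { unfold r0. split; [apply (Rmult_lt_reg_r h1); auto; unfold Rdiv; rewrite Rmult_assoc, Rinv_l; lra|].
      apply (Rmult_lt_reg_r h1); auto; unfold Rdiv; rewrite Rmult_assoc, Rinv_l; lra. }
    destruct (exist1d (fun x => Phi1 b D Kc (2 - x)) (-2) (2 - r0)) as [phi [Hp0 [Hp1 [Hp2 Hp3]]]]; [lra| |].
    { intros x Hx. destruct (Phi1_ok b D Kc (2 - x)) as [Hc Hp]; auto; try lra. split; auto.
      apply (continuity_pt_comp (fun x => 2 - x) (Phi1 b D Kc)); auto.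
      apply continuity_pt_minus; [apply continuity_pt_const; intros ??; reflexivity| apply continuity_pt_id]. }
    set (R0 := fun t => 2 - phi t).
    assert (HR : forall t, 0 <= t -> 0 < R0 t < 4) by (intros t Ht; specialize (Hp1 t Ht); unfold R0; lra).
    assert (Hrc : rcont0 R0).
    { intros eps He. destruct (Hp2 0 (Rle_refl 0) eps He) as [d [Hd Hd']]. exists d; split; auto.
      intros t [Ht1 Ht2]. unfold R0. replace (2 - phi t - (2 - phi 0)) with (- (phi t - phi 0)) by ring.
      rewrite Rabs_Ropp. apply Hd'; auto. rewrite Rminus_0_r, Rabs_right; lra. }
    assert (Hd : forall t, 0 < t -> derivable_pt_lim R0 t ((1 - R0 t) * Phi1 b D Kc (R0 t))).
    { intros t Ht. unfold R0. replace ((1 - (2 - phi t)) * Phi1 b D Kc (2 - phi t)) with (0 - (1 - phi t) * Phi1 b D Kc (2 - phi t)) by ring.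
      apply derivable_pt_lim_minus; [apply derivable_pt_lim_const| apply Hp3; auto]. }
    destruct (build b D Kc R0 Hb HD HKc HR Hrc Hd) as [HC [HA [HG Hder]]].
    set (C := fun t => cfun Kc (R0 t)) in *.
    set (A := fun t => R0 t * C t) in *.
    set (G0 := fun t => D / ((A t)^2 * C t)) in *.
    assert (HR0 : R0 0 = r0) by (unfold R0; rewrite Hp0; ring).
    assert (HC0 : C 0 = h1).
    { unfold C. rewrite HR0. apply cfun_at; auto. unfold Kc, kap, r0, D, deth. rewrite <- E2. field.
      repeat split; try lra. replace (4 * (h0 * h1 * h2 * h2) - h0 * h2 ^ 3) with (h0 * h2^2 * (4 * h1 - h2)) by ring.
      apply Rgt_not_eq. repeat apply Rmult_lt_0_compat; try apply pow_lt; lra. }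
    assert (HA0 : A 0 = h2) by (unfold A; rewrite HC0, HR0; unfold r0; field; lra).
    assert (HG0 : G0 0 = h0) by (unfold G0; rewrite HA0, HC0; unfold D, deth; rewrite <- E2; field; lra).
    exists G0, C, A, A. unfold solves_S3_global.
    split; [auto|split; [auto|split; [auto|split; [rewrite <- E2; auto|split]]]].
    + pose proof (rcont4 G0 C A A HG HC HA HA) as H. rewrite HG0, HA0, HC0 in H. rewrite <- E2. exact H.
    + intros t Ht. cbv zeta. fold b. destruct (Hder t Ht) as [DC [DA DG]].
      rewrite p_CAA, q_AAC, q_ACA, q_CAA. auto.
Qed.

Lemma c_mul f g x : continuity_pt f x -> continuity_pt g x -> continuity_pt (fun t => f t * g t) x.
Proof. intros; apply continuity_pt_mult; auto. Qed.
Lemma c_add f g x : continuity_pt f x -> continuity_pt g x -> continuity_pt (fun t => f t + g t) x.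
Proof. intros; apply continuity_pt_plus; auto. Qed.
Lemma c_sub f g x : continuity_pt f x -> continuity_pt g x -> continuity_pt (fun t => f t - g t) x.
Proof. intros; apply continuity_pt_minus; auto. Qed.
Lemma c_opp f x : continuity_pt f x -> continuity_pt (fun t => - f t) x.
Proof. intros; apply continuity_pt_opp; auto. Qed.
Lemma c_const (k : R) x : continuity_pt (fun _ => k) x.
Proof. apply continuity_pt_const. intros ??; reflexivity. Qed.
Lemma c_pow f n x : continuity_pt f x -> continuity_pt (fun t => f t ^ n) x.
Proof. intros. apply (continuity_pt_comp f (fun y => y ^ n)); auto. apply derivable_continuous_pt, derivable_pt_pow. Qed.
Lemma c_div f g x : continuity_pt f x -> continuity_pt g x -> g x <> 0 -> continuity_pt (fun t => f t / g t) x.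
Proof. intros; apply continuity_pt_div; auto. Qed.

Lemma d_sub_const f l x k : derivable_pt_lim f x l -> derivable_pt_lim (fun t => f t - k) x l.
Proof.
  intros H. apply is_derive_Reals in H. apply is_derive_Reals. auto_derive.
  - exists l; exact H.
  - replace (Derive (fun x => f x) x) with l by (symmetry; apply is_derive_unique; exact H). ring.
Qed.
Lemma d_div f g lf lg x : derivable_pt_lim f x lf -> derivable_pt_lim g x lg -> g x <> 0 ->
  derivable_pt_lim (fun t => f t / g t) x ((lf * g x - f x * lg) / (g x)^2).
Proof.
  intros Hf Hg H0. apply is_derive_Reals in Hf. apply is_derive_Reals in Hg. apply is_derive_Reals. auto_derive.
  - split; [exists lf; exact Hf| split; [exists lg; exact Hg| auto]].
  - replace (Derive (fun x => f x) x) with lf by (symmetry; apply is_derive_unique; exact Hf).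
    replace (Derive (fun x => g x) x) with lg by (symmetry; apply is_derive_unique; exact Hg). field. auto.
Qed.

Ltac cont := repeat first [ apply c_mul | apply c_add | apply c_sub | apply c_opp | apply c_pow | apply c_const | assumption ].

Lemma cv_ext f g L : cv_infty_to f L -> (forall t, 0 <= t -> f t = g t) -> cv_infty_to g L.
Proof.
  intros H E eps He. destruct (H eps He) as [T HT]. exists (Rmax T 0). intros t Ht.
  rewrite <- E by (pose proof (Rmax_r T 0); lra). apply HT. pose proof (Rmax_l T 0); lra.
Qed.

Lemma cv_comp r H : cv_infty_to r 1 -> continuity_pt H 1 -> cv_infty_to (fun t => H (r t)) (H 1).
Proof.
  intros Hr HH eps He. destruct (HH eps He) as [d [Hd Hd']].
  destruct (Hr d Hd) as [T HT]. exists T. intros t Ht.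
  destruct (Req_dec (r t) 1) as [E|E].
  - rewrite E, Rminus_diag, Rabs_R0; lra.
  - apply (Hd' (r t)). split; [split; [exact I| auto]|]. apply HT; auto.
Qed.

Lemma rpow8 x y : 0 < x -> (Rpower x y)^8 = Rpower x (y * 8).
Proof. intros Hx. rewrite <- Rpower_mult. rewrite <- (Rpower_pow 8) by (apply exp_pos). simpl INR. f_equal. ring. Qed.

Lemma core b D kap (G0 A C dA dC : R -> R) :
  0 < b -> 0 < D -> 0 < kap ->
  good A dA -> good C dC -> (forall t, continuity_pt G0 t) ->
  (forall t, 0 < G0 t /\ 0 < A t /\ 0 < C t) ->
  (forall t, 0 <= t -> G0 t * A t^2 * C t = D) ->
  (forall t, 0 <= t -> (4*D - G0 t * A t^3) * G0 t^3 * A t = kap) ->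
  (forall t, 0 < t -> dA t = b * G0 t^2 * C t^2 * (A t - C t) * (A t - 3 * C t) * A t) ->
  (forall t, 0 < t -> dC t = - b * G0 t^2 * C t^2 * (A t - C t) * (A t - 5 * C t) * C t) ->
  let Kc := D^4 / kap in
  (exists rr : R -> R, cv_infty_to rr 1 /\ forall t, 0 <= t -> 0 < rr t < 4 /\
      C t = cfun Kc (rr t) /\ A t = rr t * cfun Kc (rr t) /\
      G0 t = D / ((rr t * cfun Kc (rr t))^2 * cfun Kc (rr t))) /\
  (A 0 < C 0 -> incr_on_nonneg A /\ decr_on_nonneg C) /\
  (C 0 < A 0 -> incr_on_nonneg C).
Proof.
  intros Hb HD Hk HA HC HG Hpos HDt Hkt HdA HdC Kc.
  assert (HKc : 0 < Kc) by (unfold Kc; apply Rdiv_lt_0_compat; [apply pow_lt|]; auto).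
  assert (Hkap : forall t, 0 <= t -> kap = G0 t^4 * A t^3 * (4 * C t - A t)).
  { intros t Ht. rewrite <- (Hkt t Ht). rewrite <- (HDt t Ht). ring. }
  assert (H4 : forall t, 0 <= t -> A t < 4 * C t).
  { intros t Ht. destruct (Hpos t) as [P0 [P1 P2]]. specialize (Hkap t Ht).
    assert (0 < G0 t ^4 * A t^3) by (apply Rmult_lt_0_compat; apply pow_lt; auto).
    destruct (Rlt_or_le (A t) (4 * C t)); auto. exfalso. 
    assert (G0 t ^ 4 * A t ^ 3 * (4 * C t - A t) <= 0).
    { apply Rmult_le_0_l; lra. }
    lra. }
  set (r := fun t => A t / C t).
  set (Rf := fun t => 2 * b * G0 t^2 * A t * C t^2 * (A t - 4 * C t)).
  set (y := fun t => r t - 1).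
  set (dr := fun t => (dA t * C t - A t * dC t) / (C t)^2).
  assert (Hcr : forall t, continuity_pt r t).
  { intros t. destruct (Hpos t) as [P0 [P1 P2]]. unfold r. apply c_div; [apply HA| apply HC| lra]. }
  assert (Hgr : good y dr).
  { split.
    - intros t. unfold y. apply c_sub; [apply Hcr| apply c_const].
    - intros t Ht. unfold y, r, dr. destruct (Hpos t) as [P0 [P1 P2]].
      apply d_sub_const. apply d_div; [apply HA| apply HC|]; auto; lra. }
  assert (Hdr : forall t, 0 < t -> dr t = y t * Rf t).
  { intros t Ht. destruct (Hpos t) as [P0 [P1 P2]]. unfold dr, y, r, Rf. rewrite HdA, HdC by auto. field. lra. }
  assert (HRf : forall t, continuity_pt Rf t).
  { intros t. unfold Rf. cont; apply HA || apply HC || apply HG. }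
  assert (HRneg : forall t, 0 <= t -> Rf t < 0).
  { intros t Ht. destruct (Hpos t) as [P0 [P1 P2]]. specialize (H4 t Ht). unfold Rf.
    assert (0 < 2 * b * G0 t ^ 2 * A t * C t ^ 2).
    { repeat apply Rmult_lt_0_compat; try apply pow_lt; lra. }
    nra. }
  assert (Hy2 : forall t, 0 <= t -> (y t)^2 <= (y 0)^2).
  { intros t Ht. pose proof (good_ge _ _ 0 t (conj (Rle_refl 0) Ht) (good_sq_exp y dr 0 Hgr)) as H.
    cbv beta in H. rewrite !Rmult_0_l, exp_0, !Rmult_1_r in H. apply H.
    intros c Hc. rewrite Hdr by lra. specialize (HRneg c ltac:(lra)).
    assert (0 <= y c ^ 2) by apply pow2_ge_0. rewrite Rmult_0_l, exp_0. replace (2 * y c * (y c * Rf c) * 1 + y c ^ 2 * (0 * 1)) with (2 * (y c ^ 2) * Rf c) by ring. nra. }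
  set (rmax := 1 + Rabs (y 0)).
  assert (Hrmax : rmax < 4).
  { unfold rmax, y, r. destruct (Hpos 0) as [P0 [P1 P2]]. specialize (H4 0 (Rle_refl 0)).
    assert (A 0 / C 0 < 4) by (apply (Rmult_lt_reg_r (C 0)); auto; unfold Rdiv; rewrite Rmult_assoc, Rinv_l; lra).
    assert (0 < A 0 / C 0) by (apply Rdiv_lt_0_compat; auto).
    destruct (Rle_dec 0 (A 0 / C 0 - 1)); [rewrite Rabs_right by lra| rewrite Rabs_left by lra]; lra. }
  assert (Hrb : forall t, 0 <= t -> 0 < r t <= rmax).
  { intros t Ht. destruct (Hpos t) as [P0 [P1 P2]]. split; [unfold r; apply Rdiv_lt_0_compat; auto|].
    specialize (Hy2 t Ht). unfold rmax.
    assert (Rabs (y t) <= Rabs (y 0)).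
    { apply Rsqr_le_abs_0. unfold Rsqr. simpl in Hy2. lra. }
    assert (r t - 1 <= Rabs (y t)) by (unfold y; apply Rle_abs). lra. }
  set (k4 := 16 * b^4 * D^4 * kap * (4 - rmax)^3 / rmax^7).
  assert (Hk4 : 0 < k4).
  { unfold k4. assert (0 < rmax) by (unfold rmax; pose proof (Rabs_pos (y 0)); lra).
    apply Rdiv_lt_0_compat; [|apply pow_lt; auto].
    repeat apply Rmult_lt_0_compat; try apply pow_lt; lra. }
  set (k := Rmin 1 k4).
  assert (Hk0 : 0 < k) by (apply Rmin_pos; lra).
  assert (HQ : forall t, 0 <= t -> k <= - Rf t).
  { intros t Ht. destruct (Hpos t) as [P0 [P1 P2]]. destruct (Hrb t Ht) as [Hr1 Hr2].
    set (Q := - Rf t).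
    assert (HQ4 : Q^4 * (r t)^7 = 16 * b^4 * D^4 * kap * (4 - r t)^3).
    { unfold Q, Rf, r. rewrite (Hkap t Ht), <- (HDt t Ht). field. lra. }
    assert (HQp : 0 < Q) by (unfold Q; specialize (HRneg t Ht); lra).
    assert (Hq4 : k4 <= Q^4).
    { unfold k4.
      assert (E : Q^4 = 16 * b^4 * D^4 * kap * (4 - r t)^3 / (r t)^7).
      { rewrite <- HQ4. field. lra. }
      rewrite E. unfold Rdiv. apply Rmult_le_compat.
      - apply Rmult_le_pos; [repeat apply Rmult_le_pos; try apply pow_le; lra| apply pow_le; lra].
      - left. apply Rinv_0_lt_compat, pow_lt; lra.
      - apply Rmult_le_compat_l; [repeat apply Rmult_le_pos; try apply pow_le; lra|].
        apply pow_incr; lra.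
      - apply Rinv_le_contravar; [apply pow_lt; lra|]. apply pow_incr; lra. }
    unfold k. destruct (Rle_dec 1 Q).
    - pose proof (Rmin_l 1 k4). lra.
    - assert (Q^4 <= Q).
      { replace (Q^4) with (Q * Q^3) by ring. assert (Q^3 <= 1).
        { replace 1 with (1^3) by ring. apply pow_incr; lra. }
        nra. }
      pose proof (Rmin_r 1 k4). lra. }
  assert (Hdec : forall t, 0 <= t -> (y t)^2 * exp ((2 * k) * t) <= (y 0)^2).
  { intros t Ht. pose proof (good_ge _ _ 0 t (conj (Rle_refl 0) Ht) (good_sq_exp y dr (2 * k) Hgr)) as H.
    cbv beta in H. rewrite Rmult_0_r, exp_0, Rmult_1_r in H. apply H.
    intros c Hc. rewrite Hdr by lra. specialize (HQ c ltac:(lra)).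
    assert (0 <= y c ^ 2) by apply pow2_ge_0. assert (0 < exp (2 * k * c)) by apply exp_pos.
    assert (E : 2 * y c * (y c * Rf c) * exp (2 * k * c) + y c ^ 2 * (2 * k * exp (2 * k * c)) = 2 * (y c ^ 2 * exp (2 * k * c)) * (Rf c + k)) by ring.
    rewrite E. assert (0 <= y c ^ 2 * exp (2 * k * c)) by (apply Rmult_le_pos; lra). nra. }
  assert (Hcv : cv_infty_to r 1).
  { intros eps He. exists ((y 0)^2 / (2 * k * eps^2)). intros t Ht.
    assert (Ht0 : 0 <= t).
    { eapply Rle_trans; [|exact Ht]. apply Rdiv_le_0_compat; [apply pow2_ge_0| apply Rmult_lt_0_compat; [lra| apply pow_lt; lra]]. }
    specialize (Hdec t Ht0).
    assert (Hex : 1 + 2 * k * t <= exp (2 * k * t)).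
    { pose proof (exp_ineq1_le (2 * k * t)). lra. }
    assert (Hy : (y t)^2 * (1 + 2 * k * t) <= (y 0)^2).
    { eapply Rle_trans; [|exact Hdec]. apply Rmult_le_compat_l; [apply pow2_ge_0| lra]. }
    assert (Hkt' : (y 0)^2 <= 2 * k * eps^2 * t).
    { unfold Rdiv in Ht. apply (Rmult_le_compat_l (2 * k * eps^2)) in Ht; [|apply Rmult_le_pos; [lra| apply pow2_ge_0]].
      rewrite <- Rmult_assoc in Ht. rewrite (Rmult_comm (2 * k * eps ^ 2) (y 0 ^2)) in Ht.
      rewrite Rmult_assoc, Rinv_r in Ht by (apply Rgt_not_eq, Rmult_lt_0_compat; [lra| apply pow_lt; lra]). lra. }
    assert (Hyt : (y t)^2 < eps^2).
    { assert (0 < eps^2) by (apply pow_lt; lra).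
      assert ((y t)^2 * (1 + 2 * k * t) < eps^2 * (1 + 2 * k * t)) by nra.
      nra. }
    unfold y in Hyt. assert (Hs : Rsqr (r t - 1) < Rsqr eps) by (unfold Rsqr; simpl in Hyt; lra).
    apply Rsqr_lt_abs_0 in Hs. rewrite (Rabs_right eps) in Hs by lra. exact Hs. }
  assert (Hsign : forall t, 0 <= t -> (0 < y 0 -> 0 < y t) /\ (y 0 < 0 -> y t < 0)).
  { intros t Ht. split.
    - intros H0. apply (gronwall y dr Rf Hgr HRf Hdr t Ht). auto.
    - intros H0. pose proof (gronwall (fun s => - y s) (fun s => - dr s) Rf (good_opp _ _ Hgr) HRf) as H.
      cbv beta in H. enough (0 < - y t) by lra. apply H; auto; [|lra].
      intros s Hs. rewrite Hdr by auto. ring. }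
  split; [|split].
  - exists r. split; auto. intros t Ht. destruct (Hpos t) as [P0 [P1 P2]].
    assert (Hr4 : r t < 4) by (specialize (Hrb t Ht); lra).
    assert (Hrp : 0 < r t) by (apply Hrb; auto).
    assert (Hcf : cfun Kc (r t) = C t).
    { apply cfun_at; auto. unfold Kc, r. rewrite (Hkap t Ht), <- (HDt t Ht). field.
      specialize (H4 t Ht). repeat split; lra. }
    rewrite Hcf. split; [lra|split; [auto|split]].
    + unfold r. field. lra.
    + unfold r. rewrite <- (HDt t Ht). field. lra.
  - intros Hac.
    assert (Hy0 : y 0 < 0).
    { unfold y, r. destruct (Hpos 0) as [P0 [P1 P2]].
      assert (A 0 / C 0 < 1) by (apply (Rmult_lt_reg_r (C 0)); auto; unfold Rdiv; rewrite Rmult_assoc, Rinv_l; lra). lra. }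
    assert (Hlt : forall t, 0 <= t -> A t < C t).
    { intros t Ht. destruct (Hsign t Ht) as [_ H]. specialize (H Hy0). unfold y, r in H. destruct (Hpos t) as [P0 [P1 P2]].
      assert (A t / C t < 1) by lra. apply (Rmult_lt_compat_r (C t)) in H0; auto.
      unfold Rdiv in H0. rewrite Rmult_assoc, Rinv_l in H0; lra. }
    split.
    + intros s t Hs Hst. apply (good_lt A dA s t Hs Hst HA). intros c Hc. rewrite HdA by lra.
      destruct (Hpos c) as [P0 [P1 P2]]. specialize (Hlt c ltac:(lra)).
      assert (0 < b * G0 c ^ 2 * C c ^ 2) by (repeat apply Rmult_lt_0_compat; try apply pow_lt; lra).
      assert (0 < (A c - C c) * (A c - 3 * C c)) by nra.
      assert (0 < b * G0 c ^ 2 * C c ^ 2 * ((A c - C c) * (A c - 3 * C c)) * A c) by (apply Rmult_lt_0_compat; [apply Rmult_lt_0_compat|]; assumption).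
      lra.
    + intros s t Hs Hst.
      enough (- C s < - C t) by lra.
      apply (good_lt (fun u => - C u) (fun u => - dC u) s t Hs Hst (good_opp _ _ HC)). intros c Hc. rewrite HdC by lra.
      destruct (Hpos c) as [P0 [P1 P2]]. specialize (Hlt c ltac:(lra)).
      assert (0 < b * G0 c ^ 2 * C c ^ 2) by (repeat apply Rmult_lt_0_compat; try apply pow_lt; lra).
      assert (0 < (A c - C c) * (A c - 5 * C c)) by nra.
      assert (0 < b * G0 c ^ 2 * C c ^ 2 * ((A c - C c) * (A c - 5 * C c)) * C c) by (apply Rmult_lt_0_compat; [apply Rmult_lt_0_compat|]; assumption).
      lra.
  - intros Hac.
    assert (Hy0 : 0 < y 0).
    { unfold y, r. destruct (Hpos 0) as [P0 [P1 P2]].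
      assert (1 < A 0 / C 0) by (apply (Rmult_lt_reg_r (C 0)); auto; unfold Rdiv; rewrite Rmult_assoc, Rinv_l; lra). lra. }
    assert (Hlt : forall t, 0 <= t -> C t < A t).
    { intros t Ht. destruct (Hsign t Ht) as [H _]. specialize (H Hy0). unfold y, r in H. destruct (Hpos t) as [P0 [P1 P2]].
      assert (1 < A t / C t) by lra. apply (Rmult_lt_compat_r (C t)) in H0; auto.
      unfold Rdiv in H0. rewrite Rmult_assoc, Rinv_l in H0; lra. }
    intros s t Hs Hst. apply (good_lt C dC s t Hs Hst HC). intros c Hc. rewrite HdC by lra.
    destruct (Hpos c) as [P0 [P1 P2]]. specialize (Hlt c ltac:(lra)). specialize (H4 c ltac:(lra)).
    assert (0 < b * G0 c ^ 2 * C c ^ 2) by (repeat apply Rmult_lt_0_compat; try apply pow_lt; lra).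
    assert ((A c - C c) * (A c - 5 * C c) < 0) by nra.
    assert (0 < b * G0 c ^ 2 * C c ^ 2 * (- ((A c - C c) * (A c - 5 * C c))) * C c) by (apply Rmult_lt_0_compat; [apply Rmult_lt_0_compat; [assumption|lra]| assumption]).
    lra.
Qed.

Lemma rpown x y n : 0 < x -> (Rpower x y)^n = Rpower x (y * INR n).
Proof. intros Hx. rewrite <- Rpower_mult. rewrite <- (Rpower_pow n) by (apply exp_pos). reflexivity. Qed.

Lemma Rpower_pos x y : 0 < Rpower x y.
Proof. apply exp_pos. Qed.

Lemma lim_c D kap : 0 < D -> 0 < kap ->
  cfun (D^4 / kap) 1 = Rpower (3 / kap) (1/8) * Rpower D (1/2).
Proof.
  intros HD Hk. apply cfun_at.
  - apply Rmult_lt_0_compat; apply Rpower_pos.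
  - rewrite Rpow_mult_distr, !rpown by (auto; apply Rdiv_lt_0_compat; lra).
    replace (1 / 8 * INR 8) with 1 by (simpl; field).
    replace (1 / 2 * INR 8) with (INR 4) by (simpl; field).
    rewrite Rpower_1 by (apply Rdiv_lt_0_compat; lra). rewrite Rpower_pow by auto.
    field. lra.
Qed.

Lemma lim_0 D kap : 0 < D -> 0 < kap ->
  D / ((1 * cfun (D^4 / kap) 1)^2 * cfun (D^4 / kap) 1) = Rpower (kap / 3) (3/8) * Rpower D (-(1/2)).
Proof.
  intros HD Hk. rewrite lim_c by auto.
  set (L := Rpower (3 / kap) (1 / 8) * Rpower D (1 / 2)).
  assert (HL : 0 < L) by (apply Rmult_lt_0_compat; apply Rpower_pos).
  replace ((1 * L)^2 * L) with (L^3) by ring.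
  assert (E : L^3 = Rpower (3 / kap) (3/8) * Rpower D (3/2)).
  { unfold L. rewrite Rpow_mult_distr, !rpown by (auto; apply Rdiv_lt_0_compat; lra).
    f_equal; f_equal; simpl; field. }
  rewrite E.
  assert (E2 : Rpower (kap / 3) (3/8) = / Rpower (3 / kap) (3/8)).
  { rewrite <- Rpower_Ropp. replace (kap / 3) with (/ (3 / kap)) by (field; lra).
    unfold Rpower. rewrite ln_Rinv by (apply Rdiv_lt_0_compat; lra). f_equal. ring. }
  assert (E3 : D = Rpower D (3/2) * Rpower D (-(1/2))).
  { rewrite <- Rpower_plus. replace (3 / 2 + - (1 / 2)) with 1 by field. rewrite Rpower_1; auto. }
  rewrite E2. rewrite E3 at 1.
  assert (0 < Rpower (3 / kap) (3/8)) by apply Rpower_pos.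
  assert (0 < Rpower D (3/2)) by apply Rpower_pos.
  field. lra.
Qed.

Definition Sp (x y z : R) : R :=
  5*x^4 + 5*x^3*y - 3*x^3*z + 4*x^2*y^2 - 5*x^2*y*z + 5*x*y^3 - 5*x*y^2*z - x*y*z^2 + x*z^3
  + 5*y^4 - 3*y^3*z + y*z^3 - 3*z^4.

Lemma Sp_id x y z : q_poly x y z * x - q_poly y z x * y = (x - y) * Sp x y z.
Proof. unfold q_poly, Sp. ring. Qed.

Lemma pq_id x y z : p_poly x y z + q_poly x y z + q_poly y z x + q_poly z x y = 0.
Proof. unfold p_poly, q_poly. ring. Qed.

Lemma good_mul f f' g g' : good f f' -> good g g' -> good (fun t => f t * g t) (fun t => f' t * g t + f t * g' t).
Proof.
  intros [Hf Hf'] [Hg Hg']. split.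
  - intros t. apply c_mul; auto.
  - intros t Ht. apply derivable_pt_lim_mult; auto.
Qed.
Lemma good_sub f f' g g' : good f f' -> good g g' -> good (fun t => f t - g t) (fun t => f' t - g' t).
Proof.
  intros [Hf Hf'] [Hg Hg']. split.
  - intros t. apply c_sub; auto.
  - intros t Ht. apply derivable_pt_lim_minus; auto.
Qed.
Lemma good_const k : good (fun _ => k) (fun _ => 0).
Proof. split; [intros; apply c_const| intros; apply derivable_pt_lim_const]. Qed.
Lemma good_ext f f' g : good f f' -> (forall t, 0 < t -> f' t = g t) -> good f g.
Proof. intros [Hf Hf'] E. split; auto. intros t Ht. rewrite <- E by auto. auto. Qed.

Lemma incr_tr f g : (forall t, 0 <= t -> f t = g t) -> incr_on_nonneg f -> incr_on_nonneg g.
Proof. intros E H s t Hs Hst. rewrite <- !E by lra. apply H; auto. Qed.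
Lemma decr_tr f g : (forall t, 0 <= t -> f t = g t) -> decr_on_nonneg f -> decr_on_nonneg g.
Proof. intros E H s t Hs Hst. rewrite <- !E by lra. apply H; auto. Qed.

Lemma lims D kap (rr G0 A C : R -> R) : 0 < D -> 0 < kap -> cv_infty_to rr 1 ->
  (forall t, 0 <= t -> 0 < rr t < 4 /\
      C t = cfun (D^4/kap) (rr t) /\ A t = rr t * cfun (D^4/kap) (rr t) /\
      G0 t = D / ((rr t * cfun (D^4/kap) (rr t))^2 * cfun (D^4/kap) (rr t))) ->
  cv_infty_to G0 (Rpower (kap / 3) (3/8) * Rpower D (-(1/2))) /\
  cv_infty_to A (Rpower (3 / kap) (1/8) * Rpower D (1/2)) /\
  cv_infty_to C (Rpower (3 / kap) (1/8) * Rpower D (1/2)).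
Proof.
  intros HD Hk Hcv Hrep.
  set (Kc := D^4/kap).
  assert (HKc : 0 < Kc) by (unfold Kc; apply Rdiv_lt_0_compat; [apply pow_lt|]; auto).
  assert (Hcc : continuity_pt (cfun Kc) 1).
  { apply cont_of_derive. exists (cder Kc 1). apply cfun_deriv; auto; lra. }
  assert (Hc1 : 0 < cfun Kc 1) by apply cfun_pos.
  split; [|split].
  - rewrite <- lim_0 by auto. fold Kc.
    apply (cv_ext (fun t => (fun r => D / ((r * cfun Kc r)^2 * cfun Kc r)) (rr t))).
    + apply (cv_comp rr (fun r => D / ((r * cfun Kc r)^2 * cfun Kc r))); auto. apply c_div.
      * apply c_const.
      * apply c_mul; auto. apply c_pow. apply c_mul; auto. apply continuity_pt_id.
      * apply Rgt_not_eq. apply Rmult_lt_0_compat; auto. apply pow_lt. lra.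
    + intros t Ht. symmetry. apply Hrep; auto.
  - rewrite <- lim_c by auto. fold Kc. replace (cfun Kc 1) with (1 * cfun Kc 1) by ring.
    apply (cv_ext (fun t => (fun r => r * cfun Kc r) (rr t))).
    + apply (cv_comp rr (fun r => r * cfun Kc r)); auto. apply c_mul; auto. apply continuity_pt_id.
    + intros t Ht. symmetry. apply Hrep; auto.
  - rewrite <- lim_c by auto. fold Kc.
    apply (cv_ext (fun t => cfun Kc (rr t))).
    + apply (cv_comp rr (cfun Kc)); auto.
    + intros t Ht. symmetry. apply Hrep; auto.
Qed.

Ltac cont2 := repeat first [ apply c_mul | apply c_add | apply c_sub | apply c_opp | apply c_pow | apply c_const |
  match goal with H : forall t, continuity_pt ?f t |- continuity_pt ?f _ => apply H end ].

Theorem theorem5p17 (h0 h1 h2 h3 : R) :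
  0 < h0 -> 0 < h1 -> 0 < h2 -> 0 < h3 ->
  ((h1 = h2 /\ h2 < h3) \/ (h1 < h2 /\ h2 = h3 /\ h3 < 4 * h1)) ->
  let D := deth h0 h1 h2 h3 in
  let kappa := (4 * D - h0 * h2^3) * h0^3 * h2 in
  (exists g0 g1 g2 g3 : R -> R, solves_S3_global h0 h1 h2 h3 g0 g1 g2 g3) /\
  (forall g0 g1 g2 g3 : R -> R, solves_S3_global h0 h1 h2 h3 g0 g1 g2 g3 ->
     (forall t, 0 <= t -> (4 * D - g0 t * (g2 t)^3) * (g0 t)^3 * g2 t = kappa) /\
     cv_infty_to g0 (Rpower (kappa / 3) (3/8) * Rpower D (-(1/2))) /\
     cv_infty_to g1 (Rpower (3 / kappa) (1/8) * Rpower D (1/2)) /\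
     cv_infty_to g2 (Rpower (3 / kappa) (1/8) * Rpower D (1/2)) /\
     cv_infty_to g3 (Rpower (3 / kappa) (1/8) * Rpower D (1/2)) /\
     (h1 = h2 -> incr_on_nonneg g1 /\ incr_on_nonneg g2 /\ decr_on_nonneg g3) /\
     (h2 = h3 -> incr_on_nonneg g1)).
Proof.
  intros H0 H1 H2 H3 Hcase D kap.
  split; [apply existence; auto|].
  intros g0 g1 g2 g3 Hsol.
  destruct Hsol as [E0 [E1 [E2 [E3 [Hrc Hder]]]]].
  set (b := beta h0 h1 h2 h3).
  assert (HD : 0 < D) by (unfold D, deth; repeat apply Rmult_lt_0_compat; auto).
  assert (Hb : 0 < b).
  { unfold b, beta. fold D. apply Rdiv_lt_0_compat; [lra|]. apply Rmult_lt_0_compat; [lra| apply pow_lt; auto]. }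
  assert (Hkap : 0 < kap).
  { unfold kap, D, deth.
    replace ((4 * (h0 * h1 * h2 * h3) - h0 * h2 ^ 3) * h0 ^ 3 * h2) with (h0^4 * h2^2 * (4 * h1 * h3 - h2^2)) by ring.
    apply Rmult_lt_0_compat; [apply Rmult_lt_0_compat; apply pow_lt; auto|].
    destruct Hcase as [[F1 F2]|[F1 [F2 F3]]].
    - rewrite <- F1. assert (0 < h1 * (4 * h3 - h1)) by (apply Rmult_lt_0_compat; lra). nra.
    - rewrite <- F2. assert (0 < h2 * (4 * h1 - h2)) by (apply Rmult_lt_0_compat; lra). nra. }
  assert (Hder' : forall t, 0 < t ->
     derivable_pt_lim g0 t (- b * p_poly (g1 t) (g2 t) (g3 t) * (g0 t)^3) /\
     derivable_pt_lim g1 t (- b * q_poly (g1 t) (g2 t) (g3 t) * (g0 t)^2 * g1 t) /\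
     derivable_pt_lim g2 t (- b * q_poly (g2 t) (g3 t) (g1 t) * (g0 t)^2 * g2 t) /\
     derivable_pt_lim g3 t (- b * q_poly (g3 t) (g1 t) (g2 t) * (g0 t)^2 * g3 t)).
  { intros t Ht. exact (Hder t Ht). }
  clear Hder.
  assert (Hrc0 : rcont0 g0 /\ rcont0 g1 /\ rcont0 g2 /\ rcont0 g3).
  { repeat split; intros eps He; destruct (Hrc eps He) as [d [Hd Hd']]; exists d; split; auto;
      intros t Ht; specialize (Hd' t Ht); [rewrite E0|rewrite E1|rewrite E2|rewrite E3]; tauto. }
  destruct Hrc0 as [Hr0 [Hr1 [Hr2 Hr3]]].
  set (G0 := hat g0). set (G1 := hat g1). set (G2 := hat g2). set (G3 := hat g3).
  assert (HE : forall t, 0 <= t -> G0 t = g0 t /\ G1 t = g1 t /\ G2 t = g2 t /\ G3 t = g3 t).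
  { intros t Ht. unfold G0, G1, G2, G3. rewrite !hat_eq by auto. auto. }
  set (d0 := fun t => - b * p_poly (G1 t) (G2 t) (G3 t) * (G0 t)^3).
  set (d1 := fun t => - b * q_poly (G1 t) (G2 t) (G3 t) * (G0 t)^2 * G1 t).
  set (d2 := fun t => - b * q_poly (G2 t) (G3 t) (G1 t) * (G0 t)^2 * G2 t).
  set (d3 := fun t => - b * q_poly (G3 t) (G1 t) (G2 t) * (G0 t)^2 * G3 t).
  assert (Hc0 : forall t, continuity_pt G0 t).
  { apply hat_cont; auto. intros t Ht. eexists. apply (Hder' t Ht). }
  assert (Hc1 : forall t, continuity_pt G1 t).
  { apply hat_cont; auto. intros t Ht. eexists. apply (Hder' t Ht). }
  assert (Hc2 : forall t, continuity_pt G2 t).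
  { apply hat_cont; auto. intros t Ht. eexists. apply (Hder' t Ht). }
  assert (Hc3 : forall t, continuity_pt G3 t).
  { apply hat_cont; auto. intros t Ht. eexists. apply (Hder' t Ht). }
  assert (Hg0 : good G0 d0).
  { split; auto. intros t Ht. destruct (HE t ltac:(lra)) as [F0 [F1 [F2 F3]]]. unfold d0. rewrite F0, F1, F2, F3.
    apply hat_deriv; auto. apply Hder'; auto. }
  assert (Hg1 : good G1 d1).
  { split; auto. intros t Ht. destruct (HE t ltac:(lra)) as [F0 [F1 [F2 F3]]]. unfold d1. rewrite F0, F1, F2, F3.
    apply hat_deriv; auto. apply Hder'; auto. }
  assert (Hg2 : good G2 d2).
  { split; auto. intros t Ht. destruct (HE t ltac:(lra)) as [F0 [F1 [F2 F3]]]. unfold d2. rewrite F0, F1, F2, F3.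
    apply hat_deriv; auto. apply Hder'; auto. }
  assert (Hg3 : good G3 d3).
  { split; auto. intros t Ht. destruct (HE t ltac:(lra)) as [F0 [F1 [F2 F3]]]. unfold d3. rewrite F0, F1, F2, F3.
    apply hat_deriv; auto. apply Hder'; auto. }
  assert (Hhat : forall f t, hat f t = hat f (Rmax 0 t)).
  { intros f t. unfold hat. rewrite (Rmax_right 0 (Rmax 0 t)); auto. apply Rmax_l. }
  assert (Hpos : forall t, 0 < G0 t /\ 0 < G1 t /\ 0 < G2 t /\ 0 < G3 t).
  { intros t. set (s := Rmax 0 t). assert (Hs : 0 <= s) by apply Rmax_l.
    unfold G0, G1, G2, G3. rewrite !(Hhat _ t). fold s G0 G1 G2 G3.
    assert (HG00 : G0 0 = h0 /\ G1 0 = h1 /\ G2 0 = h2 /\ G3 0 = h3).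
    { destruct (HE 0 (Rle_refl 0)) as [F0 [F1 [F2 F3]]]. rewrite F0, F1, F2, F3. auto. }
    destruct HG00 as [F0 [F1 [F2 F3]]].
    repeat split.
    - apply (gronwall G0 d0 (fun t => - b * p_poly (G1 t) (G2 t) (G3 t) * (G0 t)^2) Hg0); auto; [| |lra].
      + intros u. unfold p_poly. cont2.
      + intros u Hu. unfold d0. ring.
    - apply (gronwall G1 d1 (fun t => - b * q_poly (G1 t) (G2 t) (G3 t) * (G0 t)^2) Hg1); auto; [| |lra].
      + intros u. unfold q_poly. cont2.
      + intros u Hu. unfold d1. ring.
    - apply (gronwall G2 d2 (fun t => - b * q_poly (G2 t) (G3 t) (G1 t) * (G0 t)^2) Hg2); auto; [| |lra].
      + intros u. unfold q_poly. cont2.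
      + intros u Hu. unfold d2. ring.
    - apply (gronwall G3 d3 (fun t => - b * q_poly (G3 t) (G1 t) (G2 t) * (G0 t)^2) Hg3); auto; [| |lra].
      + intros u. unfold q_poly. cont2.
      + intros u Hu. unfold d3. ring. }
  assert (HG00 : G0 0 = h0 /\ G1 0 = h1 /\ G2 0 = h2 /\ G3 0 = h3).
  { destruct (HE 0 (Rle_refl 0)) as [F0 [F1 [F2 F3]]]. rewrite F0, F1, F2, F3. auto. }
  destruct HG00 as [I0 [I1 [I2 I3]]].
  assert (HP : forall t, 0 <= t -> G0 t * G1 t * G2 t * G3 t = D).
  { intros t Ht.
    pose proof (good_mul _ _ _ _ (good_mul _ _ _ _ (good_mul _ _ _ _ Hg0 Hg1) Hg2) Hg3) as HgP.
    rewrite <- (good_eq _ _ 0 t (conj (Rle_refl 0) Ht) HgP).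
    - cbv beta. rewrite I0, I1, I2, I3. reflexivity.
    - intros c Hc. cbv beta. unfold d0, d1, d2, d3.
      transitivity (- b * G0 c^3 * G1 c * G2 c * G3 c *
        (p_poly (G1 c) (G2 c) (G3 c) + q_poly (G1 c) (G2 c) (G3 c) + q_poly (G2 c) (G3 c) (G1 c) + q_poly (G3 c) (G1 c) (G2 c))).
      + ring.
      + rewrite pq_id. ring. }
  assert (HgI : good (fun t => (4 * D - G0 t * (G2 t * G2 t * G2 t)) * (G0 t * G0 t * G0 t) * G2 t)
                 (fun t => ((0 - (d0 t * (G2 t * G2 t * G2 t) + G0 t * ((d2 t * G2 t + G2 t * d2 t) * G2 t + G2 t * G2 t * d2 t))) * (G0 t * G0 t * G0 t)
                    + (4 * D - G0 t * (G2 t * G2 t * G2 t)) * ((d0 t * G0 t + G0 t * d0 t) * G0 t + G0 t * G0 t * d0 t)) * G2 t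
                    + (4 * D - G0 t * (G2 t * G2 t * G2 t)) * (G0 t * G0 t * G0 t) * d2 t)).
  { apply good_mul; [apply good_mul|]; auto.
    - apply good_sub; [apply good_const|]. apply good_mul; auto. apply good_mul; [apply good_mul|]; auto.
    - apply good_mul; [apply good_mul|]; auto. }
  assert (HI : (forall t, 0 < t -> G1 t = G2 t \/ G2 t = G3 t) -> (forall t, 0 <= t -> G1 t = G2 t \/ G2 t = G3 t) ->
     forall t, 0 <= t -> (4 * D - G0 t * G2 t^3) * G0 t^3 * G2 t = kap).
  { intros Hs _ t Ht.
    pose proof (good_eq _ _ 0 t (conj (Rle_refl 0) Ht) HgI) as H. cbv beta in H.
    - replace ((4 * D - G0 t * G2 t^3) * G0 t^3 * G2 t) with ((4 * D - G0 t * (G2 t * G2 t * G2 t)) * (G0 t * G0 t * G0 t) * G2 t) by ring.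
      rewrite <- H. unfold kap. rewrite I0, I2. ring.
    - intros c Hc. rewrite <- (HP c ltac:(lra)). unfold d0, d2.
      destruct (Hs c ltac:(lra)) as [S|S].
      + rewrite S. unfold p_poly, q_poly. ring.
      + rewrite S. unfold p_poly, q_poly. ring. }
  assert (HcG : forall t, continuity_pt G0 t) by exact Hc0.
  destruct Hcase as [[F1 F2]|[F1 [F2 F3]]].
  -
    assert (Hsym : forall t, 0 <= t -> G1 t = G2 t).
    { intros t Ht.
      pose proof (gronwall (fun s => G1 s - G2 s) (fun s => d1 s - d2 s)
        (fun s => - b * G0 s ^2 * Sp (G1 s) (G2 s) (G3 s)) (good_sub _ _ _ _ Hg1 Hg2)) as H.
      cbv beta in H. enough (G1 t - G2 t = 0) by lra. apply H; auto.
      + intros u. unfold Sp. cont2.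
      + intros u Hu. unfold d1, d2. transitivity (- b * G0 u ^ 2 * (q_poly (G1 u) (G2 u) (G3 u) * G1 u - q_poly (G2 u) (G3 u) (G1 u) * G2 u)); [ring|].
        rewrite Sp_id. ring.
      + rewrite I1, I2. lra. }
    assert (HIk : forall t, 0 <= t -> (4 * D - G0 t * G2 t^3) * G0 t^3 * G2 t = kap).
    { apply HI; intros t Ht; left; apply Hsym; lra. }
    assert (Hcore := core b D kap G0 G2 G3 d2 d3 Hb HD Hkap Hg2 Hg3 Hc0
      ltac:(intros t; destruct (Hpos t); tauto)
      ltac:(intros t Ht; rewrite <- (HP t Ht), (Hsym t Ht); ring)
      HIk
      ltac:(intros t Ht; unfold d2; rewrite (Hsym t ltac:(lra)), q_ACA; ring)
      ltac:(intros t Ht; unfold d3; rewrite (Hsym t ltac:(lra)), q_CAA; ring)).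
    cbv zeta in Hcore. destruct Hcore as [[rr [Hcv Hrep]] [Hm1 Hm2]].
    destruct (lims D kap rr G0 G2 G3 HD Hkap Hcv Hrep) as [L0 [L2 L3]].
    split; [|split; [|split; [|split; [|split; [|split]]]]].
    + intros t Ht. destruct (HE t Ht) as [K0 [K1 [K2 K3]]]. rewrite <- K0, <- K2. apply HIk; auto.
    + apply (cv_ext G0); auto. intros t Ht; apply HE; auto.
    + apply (cv_ext G2); auto. intros t Ht. rewrite <- (Hsym t Ht). apply HE; auto.
    + apply (cv_ext G2); auto. intros t Ht; apply HE; auto.
    + apply (cv_ext G3); auto. intros t Ht; apply HE; auto.
    + intros _. destruct (Hm1 ltac:(lra)) as [Hi Hd]. split; [|split].
      * apply (incr_tr G2); auto. intros t Ht. rewrite <- (Hsym t Ht). apply HE; auto.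
      * apply (incr_tr G2); auto. intros t Ht; apply HE; auto.
      * apply (decr_tr G3); auto. intros t Ht; apply HE; auto.
    + intros E. lra.
  -
    assert (Hsym : forall t, 0 <= t -> G2 t = G3 t).
    { intros t Ht.
      pose proof (gronwall (fun s => G2 s - G3 s) (fun s => d2 s - d3 s)
        (fun s => - b * G0 s ^2 * Sp (G2 s) (G3 s) (G1 s)) (good_sub _ _ _ _ Hg2 Hg3)) as H.
      cbv beta in H. enough (G2 t - G3 t = 0) by lra. apply H; auto.
      + intros u. unfold Sp. cont2.
      + intros u Hu. unfold d2, d3. transitivity (- b * G0 u ^ 2 * (q_poly (G2 u) (G3 u) (G1 u) * G2 u - q_poly (G3 u) (G1 u) (G2 u) * G3 u)); [ring|].
        rewrite Sp_id. ring.
      + rewrite I2, I3. lra. }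
    assert (HIk : forall t, 0 <= t -> (4 * D - G0 t * G2 t^3) * G0 t^3 * G2 t = kap).
    { apply HI; intros t Ht; right; apply Hsym; lra. }
    assert (Hcore := core b D kap G0 G2 G1 d2 d1 Hb HD Hkap Hg2 Hg1 Hc0
      ltac:(intros t; destruct (Hpos t); tauto)
      ltac:(intros t Ht; rewrite <- (HP t Ht), <- (Hsym t Ht); ring)
      HIk
      ltac:(intros t Ht; unfold d2; rewrite <- (Hsym t ltac:(lra)), q_AAC; ring)
      ltac:(intros t Ht; unfold d1; rewrite <- (Hsym t ltac:(lra)), q_CAA; ring)).
    cbv zeta in Hcore. destruct Hcore as [[rr [Hcv Hrep]] [Hm1 Hm2]].
    destruct (lims D kap rr G0 G2 G1 HD Hkap Hcv Hrep) as [L0 [L2 L1]].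
    split; [|split; [|split; [|split; [|split; [|split]]]]].
    + intros t Ht. destruct (HE t Ht) as [K0 [K1 [K2 K3]]]. rewrite <- K0, <- K2. apply HIk; auto.
    + apply (cv_ext G0); auto. intros t Ht; apply HE; auto.
    + apply (cv_ext G1); auto. intros t Ht; apply HE; auto.
    + apply (cv_ext G2); auto. intros t Ht; apply HE; auto.
    + apply (cv_ext G2); auto. intros t Ht. rewrite (Hsym t Ht). apply HE; auto.
    + intros E. lra.
    + intros _. apply (incr_tr G1); [intros t Ht; apply HE; auto|]. apply Hm2. lra.
Qed.
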